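(* Let $\ell$ be a prime with $\ell\nmid p-1$, $\mathcal{O}$ the valuation ring of $\mathbb{Q}_\ell(\mu_{p-1})$, and $Y$ as in the context. For every character $\psi:\Delta\to\mathcal{O}^\times$, $$e_\psi\,\mathrm{BF}_{\mathcal{O}}(Y)\cong\mathcal{O}/\psi(p\theta)\mathcal{O}.$$ In particular, if $\psi$ is even and nontrivial, then $e_\psi\mathrm{BF}_{\mathcal{O}}(Y)\cong\mathcal{O}$.
   Context: Let $p$ be an odd prime, $\Delta=\mathrm{Gal}(\mathbb{Q}(\zeta_p)/\mathbb{Q})$, $\sigma_i:\zeta_p\mapsto\zeta_p^i$, $j=\sigma_{-1}$; $\psi$ is even if $\psi(j)=1$. $p\theta=-\sum_{i=1}^{p-1}i\sigma_i^{-1}\in\mathbb{Z}[\Delta]$, and $\psi$ is extended linearly to the group ring. Digraphs have incidence $e\mapsto(o(e),t(e))$; derived digraph $X(G,\alpha)$: vertices $V_X\times G$, edges $E_X\times G$, $o(e,\sigma)=(o(e),\sigma)$, $t(e,\sigma)=(t(e),\sigma\alpha(e))$, $G$ acting by left multiplication on the second coordinate. $X$ is the bouquet with $\frac{p-1}{2}p+1$ loops $e_0$, $e_{i,k}$ ($1\le k\le i\le p-1$), $\alpha(e_0)=\sigma_1$, $\alpha(e_{i,k})=\sigma_i^{-1}$, $Y=X(\Delta,\alpha)$. $\mathcal{A}_Y(w)=\sum_{o(\varepsilon)=w}t(\varepsilon)$, $\mathrm{BF}(Y)=\mathrm{coker}(\mathcal{I}-\mathcal{A}_Y)$ (a $\mathbb{Z}[\Delta]$-module),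 $\mathrm{BF}_{\mathcal{O}}(Y)=\mathcal{O}\otimes_{\mathbb{Z}_\ell}(\mathbb{Z}_\ell\otimes_{\mathbb{Z}}\mathrm{BF}(Y))$, and $e_\psi=\frac{1}{p-1}\sum_{\sigma\in\Delta}\psi(\sigma)\sigma^{-1}\in\mathcal{O}[\Delta]$. *)

(* Defs.v *)
From HB Require Import structures.
From mathcomp Require Import all_boot all_order all_algebra all_fingroup.
Set Implicit Arguments. Unset Strict Implicit. Unset Printing Implicit Defensive.
Import GRing.Theory.
Local Open Scope ring_scope.

(* sigma_i : zeta_p |-> zeta_p^i corresponds to the class of i in (Z/pZ)^x.      *)
Definition Delta (p : nat) : finGroupType := {unit 'F_p}.

Definition sigma (p i : nat) : Delta p := insubd (1%g : Delta p) (i%:R : 'F_p).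

Definition der_o (VX EX : Type) (G : finGroupType) (oX : EX -> VX)
  (e : EX * G) : VX * G := (oX e.1, e.2).
Definition der_t (VX EX : Type) (G : finGroupType) (tX : EX -> VX)
  (alpha : EX -> G) (e : EX * G) : VX * G := (tX e.1, (e.2 * alpha e.1)%g).

(* The bouquet X: one vertex, loops e_0 (= None) and e_{i,k} (= Some (i,k)),
   1 <= k <= i <= p-1. *)
Definition VX : finType := unit.
Definition EX (p : nat) : finType :=
  option {ik : 'I_p * 'I_p | (0 < ik.2 <= ik.1)%N}.
Definition oX (p : nat) (e : EX p) : VX := tt.
Definition tX (p : nat) (e : EX p) : VX := tt.
Definition alphaX (p : nat) (e : EX p) : Delta p :=
  match e with
  | None => sigma p 1
  | Some ik => ((sigma p (val ik).1)^-1)%g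
  end.

Definition VY (p : nat) : finType := (VX * Delta p)%type.
Definition EY (p : nat) : finType := (EX p * Delta p)%type.
Definition oY (p : nat) : EY p -> VY p := der_o (@oX p).
Definition tY (p : nat) : EY p -> VY p := der_t (@tX p) (@alphaX p).

(* An element x of R[V_Y] is its coefficient function: x = sum_v x(v) v. *)
Definition adjY (R : nzRingType) (p : nat) (x : {ffun VY p -> R}) : {ffun VY p -> R} :=
  [ffun v => \sum_(eps : EY p) (if tY eps == v then x (oY eps) else 0)].
(* A_Y(w) = sum_{o(eps)=w} t(eps), extended linearly. *)

(* image of I - A_Y in R[V_Y]; BF_R(Y) = R[V_Y] / (this submodule) *)
Definition imIA (R : nzRingType) (p : nat) (x : {ffun VY p -> R}) : Prop :=
  exists y : {ffun VY p -> R}, x = y - adjY y.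

(* an element of R[Delta] is its coefficient function *)
Definition gr_of (R : nzRingType) (p : nat) (s : Delta p) : {ffun Delta p -> R} :=
  [ffun t => (t == s)%:R].

(* action of R[Delta] on R[V_Y] induced by left multiplication on the
   second coordinate: tau . (v, s) = (v, tau s). *)
Definition gr_act (R : nzRingType) (p : nat) (a : {ffun Delta p -> R})
  (x : {ffun VY p -> R}) : {ffun VY p -> R} :=
  [ffun u => \sum_(t : Delta p) a t * x (u.1, (t^-1 * u.2)%g)].

Definition ptheta (p : nat) : {ffun Delta p -> int} :=
  - \sum_(1 <= i < p) (gr_of int ((sigma p i)^-1)%g) *~ i.

Definition psi_lin (R : nzRingType) (p : nat) (psi : Delta p -> R)
  (x : {ffun Delta p -> int}) : R :=
  \sum_(s : Delta p) (x s)%:~R * psi s.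

(* e_psi = 1/(p-1) sum_s psi(s) s^{-1}; coefficient at t is psi(t^{-1})/(p-1) *)
Definition e_psi (R : unitRingType) (p : nat) (psi : Delta p -> R) : {ffun Delta p -> R} :=
  [ffun t => (p.-1)%:R^-1 * psi (t^-1)%g].

Definition is_character (R : unitRingType) (p : nat) (psi : Delta p -> R) : Prop :=
  (forall s, psi s \is a GRing.unit) /\ (forall s t, psi (s * t)%g = psi s * psi t).

(* For submodules N1 <= W1 of M1 and N2 <= W2 of M2, W1/N1 ~= W2/N2 as R-modules:
   there is an R-linear bijection W1/N1 -> W2/N2, given here by a lift F of it on
   representatives (any such map has a lift by choice, and conversely any F with
   the properties below induces an R-linear bijection). *)
Definition subquot_iso (R : nzRingType) (M1 M2 : lmodType R)
  (W1 N1 : M1 -> Prop) (W2 N2 : M2 -> Prop) : Prop :=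
  exists F : M1 -> M2,
  [/\ forall x, W1 x -> W2 (F x),
      forall x y, W1 x -> W1 y -> N1 (x - y) -> N2 (F x - F y),
      forall (a : R) x y, W1 x -> W1 y -> N2 (F (a *: x + y) - (a *: F x + F y)),
      forall x, W1 x -> N2 (F x) -> N1 x &
      forall y, W2 y -> exists2 x, W1 x & N2 (F x - y)].

Definition ldvd (O : nzRingType) (l n : nat) (x : O) : Prop :=
  exists y : O, x = (l%:R) ^+ n * y.

(* O is (up to isomorphism) the valuation ring of Q_l(mu_m): a complete discrete
   valuation ring with uniformizer l, containing a primitive m-th root of unity
   zeta whose residue class generates the residue field over F_l.
   (With l not dividing m, this characterizes O = Z_l[mu_m] = W(F_l(mu_m)).) *)
Definition is_val_ring_Ql_mu (O : idomainType) (l m : nat) (zeta : O) : Prop :=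
  [/\ (l%:R : O) != 0 /\ (l%:R : O) \isn't a GRing.unit,
      forall x : O, x != 0 -> exists n (u : O), u \is a GRing.unit /\ x = u * l%:R ^+ n,
      forall a : nat -> O, (forall n, ldvd l n (a n.+1 - a n)) ->
        exists x : O, forall n, ldvd l n (x - a n),
      m.-primitive_root zeta &
      forall x : O, exists s : seq int,
        ldvd l 1 (x - \sum_(i < size s) (s`_i)%:~R * zeta ^+ i)].

(* the submodule e_psi BF_O(Y) of BF_O(Y), through its preimage in O[V_Y] *)
Definition ePsiBF (O : idomainType) (p : nat) (psi : Delta p -> O)
  (x : {ffun VY p -> O}) : Prop :=
  exists m : {ffun VY p -> O}, imIA (x - gr_act (e_psi psi) m).

Definition idealO (O : idomainType) (c : O) (y : O^o) : Prop :=
  exists z : O, y = c * z.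

(* Main.v *)
Require Import Defs.
From mathcomp Require Import all_boot all_order all_algebra all_fingroup.
From mathcomp Require Import ring zify.
Set Implicit Arguments. Unset Strict Implicit. Unset Printing Implicit Defensive.
Import GRing.Theory.
Local Open Scope ring_scope.

Definition hD (p : nat) (s : Delta p) : nat := nat_of_ord (val s : 'F_p).

Lemma val_sigma p i : prime p -> ~~ (p %| i)%N -> val (sigma p i) = i%:R.
Proof.
move=> pp ndiv; rewrite /sigma insubdK // unfold_in unitfE.
apply/eqP => /(congr1 (fun x : 'F_p => nat_of_ord x)).
rewrite val_Fp_nat //= => /eqP; rewrite -/(dvdn p i) => H. by rewrite H in ndiv.
Qed.

Lemma hD_lt p (s : Delta p) : prime p -> (0 < hD s < p)%N.
Proof.
move=> pp; rewrite /hD; apply/andP; split.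
  have : (val s : 'F_p) != 0 by rewrite -unitfE (valP s).
  by case: (val s) => [[|n] Hn].
by have := ltn_ord (val s); move=> /leq_trans; apply; rewrite Fp_cast.
Qed.

Lemma sigma_hD p (s : Delta p) : prime p -> sigma p (hD s) = s.
Proof.
move=> pp; apply: val_inj; rewrite val_sigma //; first by rewrite /hD natr_Zp.
have /andP[h0 h1] := hD_lt s pp.
by apply/negP => /(dvdn_leq h0); rewrite leqNgt h1.
Qed.

Lemma hD_sigma p i : prime p -> (0 < i < p)%N -> hD (sigma p i) = i.
Proof.
move=> pp /andP[i0 ip]; rewrite /hD val_sigma ?val_Fp_nat ?modn_small //.
by apply/negP => /(dvdn_leq i0); rewrite leqNgt ip.
Qed.

Lemma sum_Delta (R : nmodType) p (k : Delta p -> R) : prime p ->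
  \sum_(s : Delta p) k s = \sum_(1 <= i < p) k (sigma p i).
Proof.
move=> pp.
rewrite (eq_bigr (fun s => k (sigma p (hD s)))); last by move=> s _; rewrite sigma_hD.
rewrite -(big_image _ _ (@hD p) predT (fun i : nat => k (sigma p i))); apply: perm_big.
apply: uniq_perm.
- rewrite map_inj_in_uniq ?enum_uniq // => s t _ _ E.
  by rewrite -(sigma_hD s pp) -(sigma_hD t pp) E.
- exact: iota_uniq.
move=> i; rewrite mem_index_iota; apply/imageP/idP => [[s _ ->]|H].
  exact: hD_lt.
by exists (sigma p i) => //; rewrite hD_sigma.
Qed.

Lemma psi1 (O : idomainType) p (psi : Delta p -> O) :
  is_character psi -> psi 1%g = 1.
Proof.
case=> U M; have := M 1%g 1%g; rewrite mulg1 => H.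
by apply: (mulrI (U 1%g)); rewrite -H mulr1.
Qed.

Lemma psiV (O : idomainType) p (psi : Delta p -> O) s :
  is_character psi -> psi s * psi (s^-1)%g = 1.
Proof. by move=> ch; case: (ch) => _ M; rewrite -M mulgV psi1. Qed.

Lemma sum_VY (R : nmodType) p (f : VY p -> R) :
  \sum_(u : VY p) f u = \sum_(w : Delta p) f (tt, w).
Proof.
rewrite (eq_bigr (fun u => f (u.1, u.2))); last by case.
rewrite -(pair_big xpredT xpredT (fun i j => f (i, j))) /=.
by rewrite (big_pred1 tt) //; case.
Qed.

Lemma adjY_E (O : idomainType) p (y : {ffun VY p -> O}) w :
  adjY y (tt, w) = \sum_(e : EX p) y (tt, (w * (alphaX e)^-1)%g).
Proof.
rewrite ffunE /oY /tY /der_o /der_t /oX /tX.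
rewrite -(pair_big xpredT xpredT (fun (e : EX p) (s : Delta p) =>
   if (tt, (s * alphaX e)%g) == (tt, w) then y (tt, s) else 0)) /=.
apply: eq_bigr => e _; rewrite -big_mkcond /=.
rewrite (big_pred1 (w * (alphaX e)^-1)%g) // => s /=.
rewrite xpair_eqE /= ; apply/eqP/eqP => [<-|->]; by rewrite ?mulgK ?mulgVK.
Qed.

Definition FF (O : idomainType) p (psi : Delta p -> O) (x : {ffun VY p -> O}) : O :=
  \sum_(u : VY p) psi u.2 * x u.

Definition EE (O : idomainType) p (psi : Delta p -> O) : {ffun VY p -> O} :=
  [ffun u : VY p => (p.-1)%:R^-1 * psi (u.2^-1)%g].

Definition AA (O : idomainType) p (psi : Delta p -> O) : O :=
  \sum_(e : EX p) psi (alphaX e).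

Lemma FF_E (O : idomainType) p (psi : Delta p -> O) x :
  FF psi x = \sum_(w : Delta p) psi w * x (tt, w).
Proof. by rewrite /FF sum_VY. Qed.

Lemma FF_lin (O : idomainType) p (psi : Delta p -> O) (a : O) (x y : {ffun VY p -> O}) :
  FF psi [ffun u => a * x u + y u] = a * FF psi x + FF psi y.
Proof.
rewrite /FF mulr_sumr -big_split /=; apply: eq_bigr => u _.
by rewrite ffunE mulrDr mulrCA.
Qed.

Lemma FF_adj (O : idomainType) p (psi : Delta p -> O) y :
  is_character psi -> FF psi (adjY y) = AA psi * FF psi y.
Proof.
move=> ch; rewrite FF_E /AA mulr_suml.
under eq_bigr do rewrite adjY_E mulr_sumr.
rewrite exchange_big /=; apply: eq_bigr => e _.
rewrite FF_E mulr_sumr (reindex_inj (mulIg (alphaX e))) /=.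
apply: eq_bigr => s _; case: ch => _ M.
by rewrite mulgK M mulrA [psi s * _]mulrC.
Qed.

Lemma adj_EE (O : idomainType) p (psi : Delta p -> O) d :
  is_character psi ->
  adjY [ffun u => d * EE psi u] = [ffun u => (AA psi * d) * EE psi u].
Proof.
move=> ch; apply/ffunP => -[[] w]; rewrite adjY_E ffunE /AA !mulr_suml.
apply: eq_bigr => e _; rewrite !ffunE /=; case: ch => _ M.
rewrite invgM invgK M; rewrite !mulrA; congr (_ * _).
by rewrite mulrC -!mulrA; congr (_ * _); rewrite mulrC.
Qed.

Lemma gr_act_EE (O : idomainType) p (psi : Delta p -> O) m :
  is_character psi ->
  gr_act (e_psi psi) m = [ffun u => FF psi m * EE psi u].
Proof.
move=> ch; apply/ffunP => -[[] w]; rewrite !ffunE /= FF_E mulr_suml.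
have hinj : injective (fun t : Delta p => (w * t^-1)%g).
  by move=> a b /= /mulgI /invg_inj.
rewrite (reindex_inj hinj) /=; apply: eq_bigr => t _.
case: ch => _ M; rewrite ffunE invgM invgK mulgVK M.
by ring.
Qed.

Lemma sum_option (R : nmodType) (T : finType) (f : option T -> R) :
  \sum_(e : option T) f e = f None + \sum_(x : T) f (Some x).
Proof.
rewrite (bigD1 None) //=; congr (_ + _).
rewrite (@reindex_omap _ _ _ _ _ (@Some T) id) //= => [|[]//].
by apply: eq_bigl => x; rewrite eqxx.
Qed.

Lemma sum_sig (R : nmodType) (T : finType) (P : pred T) (G : T -> R) :
  \sum_(x : {t | P t}) G (val x) = \sum_(t | P t) G t.
Proof.
rewrite (@reindex_omap _ _ _ T {t | P t} val insub) => [|t Pt]; last by rewrite insubT.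
by apply: eq_bigl => x; rewrite (valP x) valK eqxx.
Qed.

Lemma sum_count (R : nmodType) p (i : 'I_p) (c : R) :
  \sum_(k : 'I_p | (0 < k <= i)%N) c = c *+ i.
Proof.
rewrite -(big_mkord (fun k => (0 < k <= i)%N) (fun _ => c)).
rewrite -(big_nat_widen 0 i.+1 p (fun k => (0 < k)%N) (fun _ => c)); last exact: ltn_ord.
rewrite big_mkcond big_ltn //= add0r.
rewrite (eq_big_nat _ _ (F2 := fun _ => c)) ?sumr_const_nat ?subn1 //.
by move=> k /andP[k0 _]; rewrite k0.
Qed.

Lemma psi_ptheta (O : idomainType) p (psi : Delta p -> O) :
  psi_lin psi (ptheta p) = - \sum_(1 <= i < p) i%:R * psi ((sigma p i)^-1)%g.
Proof.
rewrite /psi_lin /ptheta.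
under eq_bigr do rewrite ffunE sum_ffunE rmorphN /= mulNr rmorph_sum /= mulr_suml.
rewrite sumrN exchange_big /=; congr (- _); apply: eq_bigr => i _.
rewrite (bigD1 ((sigma p i)^-1)%g) //= big1 ?addr0 => [|s /negbTE ns];
  rewrite ffunMzE ffunE ?eqxx ?ns //=.
  by rewrite intz.
by rewrite mul0rz mul0r.
Qed.

Lemma sigma1 p : prime p -> sigma p 1 = 1%g.
Proof.
move=> pp; apply: val_inj; rewrite val_sigma //= dvdn1.
by apply/negP => /eqP p1; rewrite p1 in pp.
Qed.

Lemma AA_E (O : idomainType) p (psi : Delta p -> O) :
  prime p -> is_character psi ->
  AA psi = 1 + \sum_(1 <= i < p) i%:R * psi ((sigma p i)^-1)%g.
Proof.
move=> pp ch; rewrite /AA sum_option /= sigma1 // psi1 //; congr (_ + _).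
rewrite (sum_sig (fun ik : 'I_p * 'I_p => (0 < ik.2 <= ik.1)%N)
   (fun ik => psi ((sigma p ik.1)^-1)%g)).
rewrite -(pair_big_dep xpredT (fun (i : 'I_p) (k : 'I_p) => (0 < k <= i)%N)
   (fun i _ => psi ((sigma p i)^-1)%g)) /=.
under eq_bigr do rewrite sum_count.
rewrite -(big_mkord xpredT (fun i => psi ((sigma p i)^-1)%g *+ i)).
rewrite big_ltn ?prime_gt0 // mulr0n add0r.
by apply: eq_bigr => i _; rewrite mulr_natl.
Qed.

Lemma unit_nat_val (O : idomainType) l m (zeta : O) :
  prime l -> ~~ (l %| m)%N -> is_val_ring_Ql_mu l m zeta -> (m%:R : O) \is a GRing.unit.
Proof.
move=> lp ndv [[l0 lnu] fact _ _ _].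
have [a _ ha] := Bezoutl m (prime_gt0 lp).
move: ha; rewrite (eqP (_ : gcdn l m == 1)%N); last by rewrite -/(coprime l m) prime_coprime.
move=> /divnK hb; set b := (_ %/ l)%N in hb.
have Hr : 1 + a%:R * m%:R = b%:R * l%:R :> O.
  have : ((1 + a * m)%N%:R : O) = (b * l)%N%:R by rewrite hb.
  by rewrite natrD !natrM.
have nodiv : forall q : O, m%:R <> l%:R * q.
  move=> q E; move/negP: lnu; apply; apply/unitrPr; exists (b%:R - a%:R * q).
  by rewrite mulrBr mulrC -Hr E; ring.
have [/eqP m0|m0] := boolP (m%:R == 0 :> O).
  by case: (nodiv 0); rewrite m0 mulr0.
have [[|n] [u [uu E]]] := fact _ m0; first by rewrite E expr0 mulr1.
by case: (nodiv (u * l%:R ^+ n)); rewrite E exprS; ring.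
Qed.

Lemma two_neq0 (O : idomainType) l m (zeta : O) :
  prime l -> is_val_ring_Ql_mu l m zeta -> (2%:R : O) != 0.
Proof.
move=> lp [[l0 lnu] _ _ _ _]; apply/negP => /eqP t0.
have E : (l%:R : O) = (l %% 2)%:R.
  by rewrite {1}(divn_eq l 2) natrD natrM t0 mulr0 add0r.
have : (l %% 2 < 2)%N by rewrite ltn_mod.
case: (l %% 2)%N E => [|[|//]] E _.
  by rewrite E eqxx in l0.
by rewrite E unitr1 in lnu.
Qed.

Lemma ndvd_small p k : (0 < k < p)%N -> ~~ (p %| k)%N.
Proof. by move=> /andP[k0 kp]; apply/negP => /(dvdn_leq k0); rewrite leqNgt kp. Qed.

Lemma sum_char0 (O : idomainType) p (psi : Delta p -> O) :
  is_character psi -> (exists s, psi s != 1) -> \sum_(s : Delta p) psi s = 0.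
Proof.
move=> ch [t nt]; have := ch => -[_ M].
have E : \sum_(s : Delta p) psi s = psi t * \sum_(s : Delta p) psi s.
  rewrite mulr_sumr (reindex_inj (mulgI t)) /=.
  by apply: eq_bigr => s _; rewrite M.
have : (psi t - 1) * \sum_(s : Delta p) psi s = 0 by rewrite mulrBl mul1r -E subrr.
move/eqP; rewrite mulf_eq0 subr_eq0 (negbTE nt) /=; exact/eqP.
Qed.

Lemma ptheta_even0 (O : idomainType) p (psi : Delta p -> O) :
  prime p -> is_character psi -> psi (sigma p p.-1) = 1 -> (exists s, psi s != 1) ->
  (2%:R : O) != 0 -> psi_lin psi (ptheta p) = 0.
Proof.
move=> pp ch pj ntriv two0; rewrite psi_ptheta; apply/eqP; rewrite oppr_eq0; apply/eqP.
have M : forall s t, psi (s * t)%g = psi s * psi t by case: ch.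
set g := fun i => psi ((sigma p i)^-1)%g.
have T0 : \sum_(1 <= i < p) g i = 0.
  rewrite /g -(sum_Delta (fun s => psi (s^-1)%g)) //.
  rewrite (reindex_inj invg_inj) /=; under eq_bigr do rewrite invgK.
  exact: sum_char0.
have gsym : forall i, (0 < i < p)%N -> g (p - i)%N = g i.
  move=> i /andP[i0 ip]; rewrite /g.
  have -> : sigma p (p - i) = (sigma p p.-1 * sigma p i)%g.
    apply: val_inj; rewrite FinRing.val_unitM !val_sigma ?ndvd_small //; last first.
    - by have := prime_gt1 pp; lia.
    - by have := prime_gt1 pp; lia.
    - by rewrite i0.
    rewrite natrB ?(ltnW ip) // -subn1 natrB ?prime_gt0 // pchar_Fp_0 //; ring.
  rewrite invgM M.
  have := psiV (sigma p p.-1) ch; rewrite pj mul1r => ->; by rewrite mulr1.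
set S := \sum_(1 <= i < p) _.
have SS : S = \sum_(1 <= i < p) (p - i)%:R * g i.
  rewrite /S big_nat_rev /=; apply: eq_big_nat => i /andP[i1 ip].
  have -> : (1 + p - i.+1 = p - i)%N by lia.
  have gi : (0 < i < p)%N by rewrite i1.
  by have := gsym i gi; rewrite /g => ->.
have : 2%:R * S = 0.
  rewrite mulr_natl mulr2n {2}SS -big_split /=.
  under eq_big_nat => i /andP[i1 ip] do rewrite -mulrDl -natrD subnKC ?(ltnW ip) //.
  by rewrite -mulr_sumr T0 mulr0.
by move/eqP; rewrite mulf_eq0 (negbTE two0) /= => /eqP.
Qed.

Lemma FF_add (O : idomainType) p (psi : Delta p -> O) (x y : {ffun VY p -> O}) :
  FF psi (x + y) = FF psi x + FF psi y.
Proof. by rewrite /FF -big_split /=; apply: eq_bigr => u _; rewrite ffunE mulrDr. Qed.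

Lemma FF_opp (O : idomainType) p (psi : Delta p -> O) (x : {ffun VY p -> O}) :
  FF psi (- x) = - FF psi x.
Proof. by rewrite /FF -sumrN; apply: eq_bigr => u _; rewrite ffunE mulrN. Qed.

Lemma FF_sub (O : idomainType) p (psi : Delta p -> O) (x y : {ffun VY p -> O}) :
  FF psi (x - y) = FF psi x - FF psi y.
Proof. by rewrite FF_add FF_opp. Qed.

Lemma FF_scal (O : idomainType) p (psi : Delta p -> O) (a : O) (x : {ffun VY p -> O}) :
  FF psi [ffun u => a * x u] = a * FF psi x.
Proof. by rewrite /FF mulr_sumr; apply: eq_bigr => u _; rewrite ffunE mulrCA. Qed.

Lemma adjY_add (O : idomainType) p (x y : {ffun VY p -> O}) :
  adjY (x + y) = adjY x + adjY y.
Proof.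
apply/ffunP => -[[] w]; rewrite [RHS]ffunE !adjY_E -big_split /=.
by apply: eq_bigr => e _; rewrite ffunE.
Qed.

Lemma adjY0 (O : idomainType) p : adjY (0 : {ffun VY p -> O}) = 0.
Proof.
apply/ffunP => -[[] w]; rewrite adjY_E [RHS]ffunE big1 // => e _; by rewrite ffunE.
Qed.

Lemma FF_EE (O : idomainType) p (psi : Delta p -> O) :
  prime p -> is_character psi -> (p.-1%:R : O) \is a GRing.unit -> FF psi (EE psi) = 1.
Proof.
move=> pp ch u; rewrite FF_E.
under eq_bigr do rewrite ffunE /= mulrCA psiV // mulr1.
rewrite (sum_Delta (fun _ => _)) // sumr_const_nat subn1.
by set q := (p.-1%:R : O)^-1; rewrite -mulr_natr /q mulVr.
Qed.

Lemma main_iso (O : idomainType) p l (zeta : O) (psi : Delta p -> O) :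
  prime p -> prime l -> ~~ (l %| p.-1)%N -> is_val_ring_Ql_mu l p.-1 zeta ->
  is_character psi ->
  subquot_iso (M1 := {ffun VY p -> O^o}) (M2 := O^o)
    (ePsiBF psi) (@imIA O p) (fun _ => True) (idealO (psi_lin psi (ptheta p))).
Proof.
move=> pp lp ndv vr ch.
have u := unit_nat_val lp ndv vr.
set c := psi_lin psi (ptheta p).
have Ac : AA psi = 1 - c by rewrite AA_E // /c psi_ptheta opprK.
have FE := FF_EE pp ch u.
have FIA : forall z, FF psi (z - adjY z) = c * FF psi z.
  by move=> z; rewrite FF_sub FF_adj // Ac; ring.
exists (FF psi); split.
- by [].
- move=> x y _ _ [z Ez]; exists (FF psi z).
  rewrite -FF_sub Ez; exact: FIA.
- move=> a x y _ _; exists 0; rewrite mulr0.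
  have -> : a *: x + y = [ffun u => a * x u] + y.
    by apply/ffunP => v; rewrite !ffunE.
  by rewrite FF_add FF_scal subrr.
- move=> x [m [z Ez]] [k Ek].
  have Hx : x = [ffun u => FF psi m * EE psi u] + (z - adjY z).
    by rewrite -gr_act_EE // -Ez addrC subrK.
  have Fm : FF psi m = c * (k - FF psi z).
    move: Ek; rewrite Hx FF_add FF_scal FE FIA mulr1 => Ek.
    by rewrite mulrBr -Ek; ring.
  exists ([ffun u => (k - FF psi z) * EE psi u] + z).
  rewrite adjY_add adj_EE // Hx; apply/ffunP => v; rewrite !ffunE Fm Ac; ring.
- move=> y _; exists [ffun u => y * EE psi u].
    exists [ffun u => y * EE psi u]; exists 0.
    rewrite adjY0 gr_act_EE // FF_scal FE mulr1 !subrr //.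
  by exists 0; rewrite FF_scal FE mulr1 subrr mulr0.
Qed.

Lemma subquot_iso_N2 (O : idomainType) p (W1 N1 : {ffun VY p -> O^o} -> Prop)
  (N2 N2' : O^o -> Prop) :
  (forall y, N2 y <-> N2' y) ->
  subquot_iso (M1 := {ffun VY p -> O^o}) (M2 := O^o) W1 N1 (fun _ => True) N2 ->
  subquot_iso (M1 := {ffun VY p -> O^o}) (M2 := O^o) W1 N1 (fun _ => True) N2'.
Proof.
move=> eqN [F [h1 h2 h3 h4 h5]]; exists F; split => //.
- by move=> x y Wx Wy Nxy; apply/eqN; apply: h2.
- by move=> a x y Wx Wy; apply/eqN; apply: h3.
- by move=> x Wx /eqN; apply: h4.
- by move=> y Wy; have [x Wx Nx] := h5 y Wy; exists x => //; apply/eqN.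
Qed.

Unset Implicit Arguments.

Theorem theorem5p11 (p l : nat) (O : idomainType) (zeta : O) (psi : Delta p -> O) :
  prime p -> odd p -> prime l -> ~~ (l %| p.-1)%N ->
  is_val_ring_Ql_mu l p.-1 zeta ->
  is_character psi ->
  subquot_iso (M1 := {ffun VY p -> O^o}) (M2 := O^o)
    (ePsiBF psi) (@imIA O p) (fun _ => True) (idealO (psi_lin psi (ptheta p)))
  /\
  (psi (sigma p p.-1) = 1 -> (exists s, psi s != 1) ->
   subquot_iso (M1 := {ffun VY p -> O^o}) (M2 := O^o)
    (ePsiBF psi) (@imIA O p) (fun _ => True) (fun y : O^o => y = 0)).
Proof.
move=> pp _ lp ndv vr ch; split; first exact: main_iso vr ch.
move=> pj nt.
have c0 := ptheta_even0 pp ch pj nt (two_neq0 lp vr).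
apply: subquot_iso_N2 (main_iso pp lp ndv vr ch).
move=> y; rewrite c0; split => [[z ->]|->]; first by rewrite mul0r.
by exists 0; rewrite mul0r.
Qed.
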